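(* Let $\mathcal{R}=(\mathcal{W},\mathcal{R}_1,\mathcal{R}_2)$ with $\mathcal{W}=\{1,\dots,m\}$, let $\mathcal{S}$, $L$, $K_1,\dots,K_4$ be constructed from $\mathcal{R}$ as below, and let $\mathcal{T}$ be a solution to the $\mathcal{S}$-cyclic triomino problem. For $s\in\mathbb{Z}^2$: if $p(s,1)$ holds, then $q(s+u_j,1)$ holds for every $1\le j\le 4$; and if $q(s,1)$ holds, then $p(s+u_j,1)$ holds for every $1\le j\le 4$.
   Context: A domino set is $\mathcal{R}=(\mathcal{W},\mathcal{R}_1,\mathcal{R}_2)$ with $\mathcal{W}$ non-empty finite and $\mathcal{R}_1,\mathcal{R}_2\subset\mathcal{W}^2$; here $\mathcal{W}=\{1,\dots,m\}$. Let $u_1=(1,0),u_2=(0,1),u_3=(-1,0),u_4=(0,-1)$, indices mod 4. Fix $n\ge 2m+1$ and regard integers as elements of $\mathbb{Z}_n$. Let $L=\{(w,0,0): w\in\mathcal{W}\}$, $K_1=L\cup\{(0,b,a):(a,b)\in\mathcal{R}_1\}$, $K_2=L\cup\{(0,a,b):(a,b)\in\mathcal{R}_2\}$, $K_3=L\cup\{(0,a,b):(a,b)\in\mathcal{R}_1\}$, $K_4=L\cup\{(0,b,a):(a,b)\in\mathcal{R}_2\}$, with $K_{i+4}=K_i$. Let $\mathcal{V}=\mathbb{Z}_n$, $\mathcal{S}_i=\{(a+k,b+k,c+k):(a,b,c)\in K_i, k\in\mathcal{V}\}$, $\mathcal{S}_{i+4}=\mathcal{S}_i$, and $\mathcal{S}=(\mathcal{V},\mathcal{S}_1,\dots,\mathcal{S}_4)$.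 A solution to the $\mathcal{S}$-cyclic triomino problem is a function $\mathcal{T}:\mathbb{Z}^2\to\mathcal{V}$ with $(\mathcal{T}(s),\mathcal{T}(s+u_i),\mathcal{T}(s+u_{i+1}))\in\mathcal{S}_i$ for all $s$ and $1\le i\le 4$. For $s\in\mathbb{Z}^2$, $i\in\mathbb{Z}$, $p(s,i)$ is the statement $(\mathcal{T}(s),\mathcal{T}(s+u_i),\mathcal{T}(s+u_{i+1}))\in L$ and $q(s,i)$ is the statement $(\mathcal{T}(s),\mathcal{T}(s+u_i),\mathcal{T}(s+u_{i+1}))\in K_i\setminus L$. *)

(* Defs.v *)
From mathcomp Require Import all_boot all_order all_algebra.
Set Implicit Arguments. Unset Strict Implicit. Unset Printing Implicit Defensive.
Import GRing.Theory.
Local Open Scope ring_scope.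

Definition pt := (int * int)%type.
Definition padd (s t : pt) : pt := (s.1 + t.1, s.2 + t.2).

Definition u (i : nat) : pt :=
  match (i %% 4)%N with
  | 1 => (1, 0)
  | 2 => (0, 1)
  | 3 => (-1, 0)
  | _ => (0, -1)
  end.

Definition trip (n : nat) := ('Z_n * 'Z_n * 'Z_n)%type.

(* W = {1,...,m}; elements of W are regarded as elements of Z_n. *)
Definition inW (m w : nat) : Prop := (1 <= w <= m)%N.

Definition Lset (n m : nat) (t : trip n) : Prop :=
  exists w : nat, inW m w /\ t = (w%:R, 0, 0).

Definition Kset (n m : nat) (R1 R2 : rel nat) (i : nat) (t : trip n) : Prop :=
  Lset m t \/
  match (i %% 4)%N with
  | 1 => exists a b, R1 a b /\ t = (0, b%:R, a%:R)
  | 2 => exists a b, R2 a b /\ t = (0, a%:R, b%:R)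
  | 3 => exists a b, R1 a b /\ t = (0, a%:R, b%:R)
  | _ => exists a b, R2 a b /\ t = (0, b%:R, a%:R)
  end.

Definition Sset (n m : nat) (R1 R2 : rel nat) (i : nat) (t : trip n) : Prop :=
  exists (a b c k : 'Z_n), Kset m R1 R2 i (a, b, c) /\ t = (a + k, b + k, c + k).

Definition triple_at (n : nat) (T : pt -> 'Z_n) (s : pt) (i : nat) : trip n :=
  (T s, T (padd s (u i)), T (padd s (u i.+1))).

Definition is_solution (n m : nat) (R1 R2 : rel nat) (T : pt -> 'Z_n) : Prop :=
  forall (s : pt) (i : nat), (1 <= i <= 4)%N -> Sset m R1 R2 i (triple_at T s i).

Definition p_st (n m : nat) (T : pt -> 'Z_n) (s : pt) (i : nat) : Prop :=
  Lset m (triple_at T s i).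

Definition q_st (n m : nat) (R1 R2 : rel nat) (T : pt -> 'Z_n) (s : pt) (i : nat) : Prop :=
  Kset m R1 R2 i (triple_at T s i) /\ ~ Lset m (triple_at T s i).

(* Main.v *)
Require Import Defs.
From mathcomp Require Import all_boot all_order all_algebra.
From mathcomp Require Import zify.
Set Implicit Arguments. Unset Strict Implicit.
Import GRing.Theory.
Local Open Scope ring_scope.

Definition Wv (m n : nat) (z : 'Z_n) : Prop := exists w, inW m w /\ z = w%:R.

Lemma natZn_neq0 (n k : nat) : (1 < n)%N -> (0 < k < n)%N -> (k%:R : 'Z_n) != 0.
Proof.
move=> n1 hk; apply/eqP => /(congr1 (@nat_of_ord _)); rewrite val_Zp_nat // modn_small; last by lia.
by move=> /= h; lia.
Qed.

Lemma Wv_excl (m n : nat) (x y : 'Z_n) : (2 * m + 1 <= n)%N -> Wv m x -> Wv m y -> x + y != 0.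
Proof.
move=> hn [w [hw ->]] [w' [hw' ->]]; rewrite -natrD; apply: natZn_neq0; rewrite /inW in hw hw'; lia.
Qed.

Lemma Wv_neq0 (m n : nat) (x : 'Z_n) : (2 * m + 1 <= n)%N -> Wv m x -> x != 0.
Proof.
move=> hn [w [hw ->]]; apply: natZn_neq0; rewrite /inW in hw; lia.
Qed.

Definition down (m n : nat) (T : pt -> 'Z_n) t v := Wv m (T t - T (padd t v)).
Definition up (m n : nat) (T : pt -> 'Z_n) t v := Wv m (T (padd t v) - T t).

Lemma updown (m n : nat) (T : pt -> 'Z_n) t v : (2 * m + 1 <= n)%N ->
  up m T t v -> down m T t v -> False.
Proof.
move=> hn hu hd; have := Wv_excl hn hu hd.
by rewrite addrA subrK subrr eqxx.
Qed.

Lemma dirs (m n : nat) (R1 R2 : rel nat)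
  (HR1 : forall a b, R1 a b -> inW m a /\ inW m b)
  (HR2 : forall a b, R2 a b -> inW m a /\ inW m b)
  (T : pt -> 'Z_n) (HT : is_solution m R1 R2 T) t i : (1 <= i <= 4)%N ->
  (down m T t (u i) /\ down m T t (u i.+1) /\ T (padd t (u i.+1)) = T (padd t (u i)))
  \/ (up m T t (u i) /\ up m T t (u i.+1)).
Proof.
move=> hi; have [a [b [c [k [hK]]]]] := HT t i hi.
rewrite /triple_at /down /up => -[-> -> ->].
case: hK => [[w [hw [-> -> ->]]]|hK].
  left; rewrite ?add0r addrK; split; first by exists w.
  by split => //; exists w.
right.
have E : forall x : 'Z_n, x + k - k = x by move=> x; rewrite addrK.
have hi' : i = 1%N \/ i = 2%N \/ i = 3%N \/ i = 4%N by lia.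
case: hi' => [?|[?|[?|?]]]; subst i; move: hK => /=;
  move=> [a' [b' [hR [-> -> ->]]]]; rewrite (add0r k) !addrK;
  first [have [h1 h2] := HR1 _ _ hR | have [h1 h2] := HR2 _ _ hR];
  first [by split; [exists b' | exists a'] | by split; [exists a' | exists b']].
Qed.

Lemma aux0 (R : zmodType) (x y : R) : x + (0 + y - (x + y)) = 0.
Proof. by rewrite add0r addrA subrr. Qed.

Lemma u5 : u 5 = u 1. Proof. by []. Qed.

Lemma classify (m n : nat) (R1 R2 : rel nat)
  (HR1 : forall a b, R1 a b -> inW m a /\ inW m b)
  (HR2 : forall a b, R2 a b -> inW m a /\ inW m b)
  (Hn : (2 * m + 1 <= n)%N)
  (T : pt -> 'Z_n) (HT : is_solution m R1 R2 T) t :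
  (forall k, (1 <= k <= 4)%N -> down m T t (u k) /\ T (padd t (u k)) = T (padd t (u 1)))
  \/ (forall k, (1 <= k <= 4)%N -> up m T t (u k)).
Proof.
have D := dirs HR1 HR2 HT t.
have D4 := D 4%N erefl; rewrite u5 in D4.
have [d1|e1] := D 1%N erefl; have [d2|e2] := D 2%N erefl;
have [d3|e3] := D 3%N erefl; case: D4 => [d4|e4];
repeat match goal with
| H : _ /\ _ |- _ => destruct H
end;
try solve [exfalso; match goal with H1: up _ _ _ ?v, H2 : down _ _ _ ?v |- _ => exact: (updown Hn H1 H2) end].
  left => k hk; have hk' : k = 1%N \/ k = 2%N \/ k = 3%N \/ k = 4%N by lia.
  by case: hk' => [->|[->|[->|->]]]; split => //; congruence.
right => k hk; have hk' : k = 1%N \/ k = 2%N \/ k = 3%N \/ k = 4%N by lia.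
by case: hk' => [->|[->|[->|->]]].
Qed.

Lemma opp (s : pt) j : (1 <= j <= 4)%N ->
  exists k, (1 <= k <= 4)%N /\ padd (padd s (u j)) (u k) = s.
Proof.
move=> hj; have hj' : j = 1%N \/ j = 2%N \/ j = 3%N \/ j = 4%N by lia.
case: s => a b.
case: hj' => [->|[->|[->|->]]]; [exists 3%N|exists 4%N|exists 1%N|exists 2%N];
  rewrite /padd /u /=; split => //; by rewrite ?addr0 ?addrK ?subrK.
Qed.

Theorem lemma3p4 (m n : nat) (R1 R2 : rel nat)
  (Hm : (0 < m)%N)
  (HR1 : forall a b, R1 a b -> inW m a /\ inW m b)
  (HR2 : forall a b, R2 a b -> inW m a /\ inW m b)
  (Hn : (2 * m + 1 <= n)%N)
  (T : pt -> 'Z_n) (HT : is_solution m R1 R2 T) (s : pt) :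
  (p_st m T s 1 -> forall j, (1 <= j <= 4)%N -> q_st m R1 R2 T (padd s (u j)) 1) /\
  (q_st m R1 R2 T s 1 -> forall j, (1 <= j <= 4)%N -> p_st m T (padd s (u j)) 1).
Proof.
have C := classify HR1 HR2 Hn HT.
split.
- move=> [w [hw E]] j hj; move: E; rewrite /triple_at => -[Es Es1 Es2].
  have ds1 : down m T s (u 1) by exists w; rewrite /down Es Es1 subr0.
  have [Cs|Cs] := C s; last by case: (updown Hn (Cs 1%N erefl) ds1).
  have [dsj Etj] := Cs j hj; rewrite Es1 in Etj.
  have [k [hk Ek]] := opp s hj.
  set t := padd s (u j) in Etj Ek *.
  have utk : up m T t (u k) by rewrite /up Ek.
  have [Ct|Ct] := C t; first by case: (updown Hn utk (proj1 (Ct k hk))).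
  have ut1 := Ct 1%N erefl.
  have [a [b [c [k' [hK]]]]] := HT t 1%N erefl.
  rewrite /triple_at => -[Et Et1 Et2].
  case: hK => [[w' [hw' [Ea Eb Ec]]]|].
    exfalso; have hw'v : Wv m (w'%:R : 'Z_n) by exists w'.
    have := Wv_excl Hn hw'v ut1.
    rewrite /= Et Et1 Ea Eb.
    have -> : (w'%:R : 'Z_n) + (0 + k' - (w'%:R + k')) = 0 by apply: aux0.
    by rewrite eqxx.
  move=> /= [a' [b' [hR [Ea Eb Ec]]]].
  have k0 : k' = 0 by rewrite -Etj Et Ea add0r.
  rewrite /q_st /triple_at Et Et1 Et2 Ea Eb Ec k0 !addr0.
  split; first by right; exists a', b'.
  move=> [w'' [hw'' [E0 _ _]]].
  have hv : Wv m (w''%:R : 'Z_n) by exists w''.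
  by move/eqP: (Wv_neq0 Hn hv); rewrite -E0.
- move=> [hK hnL] j hj.
  case: hK => [//|/= [a [b [hR E]]]].
  move: E; rewrite /triple_at => -[Es Es1 Es2].
  have [_ hb] := HR1 _ _ hR.
  have us1 : up m T s (u 1) by exists b; rewrite /up Es Es1 subr0.
  have [Cs|Cs] := C s; first by case: (updown Hn us1 (proj1 (Cs 1%N erefl))).
  have usj := Cs j hj.
  have [k [hk Ek]] := opp s hj.
  set t := padd s (u j) in usj Ek *.
  have dtk : down m T t (u k) by rewrite /down Ek.
  have [Ct|Ct] := C t; last by case: (updown Hn (Ct k hk) dtk).
  have [_ Etk] := Ct k hk; rewrite Ek Es in Etk.
  have [_ Et2] := Ct 2%N erefl.
  have [w [hw Ew]] := usj.
  rewrite Es subr0 in Ew.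
  exists w; split => //; rewrite /triple_at Ew Et2 -Etk //.
Qed.
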